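(* Let $n\ge1$, let $\Omega=\begin{pmatrix}0&I_n\\-I_n&0\end{pmatrix}$ and $C(X,Y)=X\Omega Y^T$ for row vectors $X,Y\in\mathbb C^{2n}$. Let $F(x)=(f_0(x),\dots,f_{2n-1}(x))$ be a vector of $2n$ (sufficiently differentiable) functions of $x$ satisfying $$C(F^{(i)},F^{(i+1)})=0\ \ (0\le i\le n-2),\qquad C(F^{(n-1)},F^{(n)})=-1.$$ Then the $(n+1)\times 2n$ matrix whose rows are, from top to bottom, $F^{(n)},F,F',\dots,F^{(n-1)}$ can be completed to a symplectic matrix $\Phi(x)\in Sp(2n,\mathbb C)$ (i.e. $\Phi\Omega\Phi^T=\Omega$) by adding $n-1$ rows on the top; that is, there is $\Phi(x)\in Sp(2n,\mathbb C)$ whose $n$-th row is $F^{(n)}$ and whose $(n+i)$-th row is $F^{(i-1)}$ for $1\le i\le n$.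
   Context: $F^{(j)}$ denotes the componentwise $j$-th derivative of $F$ with respect to $x$. *)

(* Defs.v *)
From HB Require Import structures.
From mathcomp Require Import all_boot all_order all_algebra.
From mathcomp Require Import all_classical all_reals all_analysis.
From mathcomp Require Import complex.
Set Implicit Arguments. Unset Strict Implicit. Unset Printing Implicit Defensive.
Import Order.TTheory GRing.Theory Num.Theory numFieldNormedType.Exports.
Local Open Scope ring_scope.

Definition Omega (R : realType) (n : nat) : 'M[R[i]]_(n + n) :=
  block_mx 0 1%:M (- 1%:M) 0.

Definition Cform (R : realType) (n : nat) (X Y : 'rV[R[i]]_(n + n)) : 'M[R[i]]_1 :=
  X *m Omega R n *m Y^T.

Definition symplectic (R : realType) (n : nat) (Phi : 'M[R[i]]_(n + n)) : Prop :=
  Phi *m Omega R n *m Phi^T = Omega R n.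

Definition cderive_n (R : realType) (j : nat) (g : R -> R[i]) : R -> R[i] :=
  fun x => Complex (derive1n j (fun t => complex.Re (g t)) x)
                   (derive1n j (fun t => complex.Im (g t)) x).

Definition Fder (R : realType) (m : nat) (j : nat) (F : R -> 'rV[R[i]]_m)
  : R -> 'rV[R[i]]_m :=
  fun x => \row_k cderive_n j (fun t => F t 0 k) x.

Definition smooth_on (R : realType) (m : nat) (U : set R) (F : R -> 'rV[R[i]]_m)
  : Prop :=
  forall (j : nat) (k : 'I_m) (x : R), U x ->
    derivable (derive1n j (fun t => complex.Re (F t 0 k))) x 1 /\
    derivable (derive1n j (fun t => complex.Im (F t 0 k))) x 1.

(* Main.v *)
Require Import Defs.
From HB Require Import structures.
From mathcomp Require Import all_boot all_order all_algebra.
From mathcomp Require Import all_classical all_reals all_analysis.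
From mathcomp Require Import complex.
From mathcomp Require Import ring zify.
Import Order.TTheory GRing.Theory Num.Theory numFieldNormedType.Exports.
Local Open Scope ring_scope.


Section HDsec.
Variable R : realType.
Local Notation Rc := (complex.Re). Local Notation Ic := (complex.Im).

Lemma ReM (u v : R[i]) : Rc (u * v) = Rc u * Rc v - Ic u * Ic v.
Proof. by case: u => a b; case: v => c d; simpc. Qed.
Lemma ImM (u v : R[i]) : Ic (u * v) = Rc u * Ic v + Ic u * Rc v.
Proof. by case: u => a b; case: v => c d; simpc. Qed.
Lemma ReD (u v : R[i]) : Rc (u + v) = Rc u + Rc v.
Proof. by case: u => a b; case: v => c d; simpc. Qed.
Lemma ImD (u v : R[i]) : Ic (u + v) = Ic u + Ic v.
Proof. by case: u => a b; case: v => c d; simpc. Qed.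
Lemma ReN (u : R[i]) : Rc (- u) = - Rc u.
Proof. by case: u => a b; simpc. Qed.
Lemma ImN (u : R[i]) : Ic (- u) = - Ic u.
Proof. by case: u => a b; simpc. Qed.

Definition HD (u : R -> R[i]) (x : R) (d : R[i]) :=
  is_derive x (1:R) (fun t => Rc (u t)) (Rc d) /\
  is_derive x (1:R) (fun t => Ic (u t)) (Ic d).

Lemma HD_ext u v x d d' : (forall t, u t = v t) -> d = d' -> HD u x d -> HD v x d'.
Proof.
move=> uv <-; have -> : v = u by apply/funext => t; rewrite uv.
done.
Qed.

Arguments HD_ext {u v x d d'}.

Lemma HD_add u v x du dv : HD u x du -> HD v x dv ->
  HD (fun t => u t + v t) x (du + dv).
Proof.
move=> [h1 h2] [h3 h4]; split.
  have -> : (fun t => Rc (u t + v t)) = (fun t => Rc (u t)) + (fun t => Rc (v t)).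
    by apply/funext => t; rewrite ReD.
  rewrite ReD; exact: is_deriveD.
have -> : (fun t => Ic (u t + v t)) = (fun t => Ic (u t)) + (fun t => Ic (v t)).
  by apply/funext => t; rewrite ImD.
rewrite ImD; exact: is_deriveD.
Qed.

Arguments HD_add {u v x du dv}.

Lemma HD_opp u x du : HD u x du -> HD (fun t => - u t) x (- du).
Proof.
move=> [h1 h2]; split.
  have -> : (fun t => Rc (- u t)) = - (fun t => Rc (u t)).
    by apply/funext => t; rewrite ReN.
  rewrite ReN; exact: is_deriveN.
have -> : (fun t => Ic (- u t)) = - (fun t => Ic (u t)).
  by apply/funext => t; rewrite ImN.
rewrite ImN; exact: is_deriveN.
Qed.

Lemma smulr (a b : R) : a *: b = a * b. Proof. by []. Qed.

Lemma HD_mul u v x du dv : HD u x du -> HD v x dv ->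
  HD (fun t => u t * v t) x (u x * dv + v x * du).
Proof.
move=> [h1 h2] [h3 h4]; split.
  have -> : (fun t => Rc (u t * v t)) =
     (fun t => Rc (u t)) * (fun t => Rc (v t)) - (fun t => Ic (u t)) * (fun t => Ic (v t)).
    by apply/funext => t; rewrite ReM.
  apply: is_derive_eq.
  rewrite ReD !ReM /= !smulr; ring.
have -> : (fun t => Ic (u t * v t)) =
   (fun t => Rc (u t)) * (fun t => Ic (v t)) + (fun t => Ic (u t)) * (fun t => Rc (v t)).
  by apply/funext => t; rewrite ImM.
apply: is_derive_eq.
rewrite ImD !ImM /= !smulr; ring.
Qed.

Arguments HD_mul {u v x du dv}.

Lemma HD_cst c x : HD (fun _ => c) x 0.
Proof. split; exact: is_derive_cst. Qed.

Lemma HD_sum m (f : 'I_m -> R -> R[i]) (d : 'I_m -> R[i]) x :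
  (forall k, HD (f k) x (d k)) ->
  HD (fun t => \sum_(k < m) f k t) x (\sum_(k < m) d k).
Proof.
elim: m f d => [|m IH] f d H.
  apply: HD_ext (HD_cst 0 x) => [t|]; by rewrite big_ord0.
have H1 := HD_add (IH (fun k => f (widen_ord (leqnSn m) k)) (fun k => d (widen_ord (leqnSn m) k)) (fun k => H _)) (H ord_max).
apply: HD_ext H1 => [t|]; by rewrite big_ord_recr.
Qed.

Lemma HD_near_cst u x d c : nbhs x (fun t => u t = c) -> HD u x d -> d = 0.
Proof.
move=> hn [h1 h2].
have e1 : is_derive x (1:R) (fun t => Rc (u t)) 0.
  apply: (near_eq_is_derive _ (is_derive_cst (Rc c) x 1)).
  by near=> t; rewrite /cst (near hn t).
have e2 : is_derive x (1:R) (fun t => Ic (u t)) 0.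
  apply: (near_eq_is_derive _ (is_derive_cst (Ic c) x 1)).
  by near=> t; rewrite /cst (near hn t).
have r1 : Rc d = 0 by rewrite -(@derive_val _ _ _ _ _ _ _ h1) (@derive_val _ _ _ _ _ _ _ e1).
have r2 : Ic d = 0 by rewrite -(@derive_val _ _ _ _ _ _ _ h2) (@derive_val _ _ _ _ _ _ _ e2).
by move: r1 r2; clear h1 h2; case: d => a b /= -> ->.
Unshelve. all: by end_near.
Qed.

Lemma HD_cd j (u : R -> R[i]) x :
  derivable (derive1n j (fun t => Rc (u t))) x 1 ->
  derivable (derive1n j (fun t => Ic (u t))) x 1 ->
  HD (cderive_n j u) x (cderive_n j.+1 u x).
Proof.
move=> d1 d2; split => /=; rewrite derive1E; exact: derivableP.
Qed.
End HDsec.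
Arguments HD {R}.
Arguments HD_ext {R u v x d d'}.
Arguments HD_add {R u v x du dv}.
Arguments HD_opp {R u x du}.
Arguments HD_mul {R u v x du dv}.
Arguments HD_sum {R m f d x}.
Arguments HD_near_cst {R u x d c}.
Arguments HD_cd {R j u x}.


Section G.
Variables (R : realType) (n : nat).

Lemma Cform_entry (X Y : 'rV[R[i]]_(n+n)) : Cform X Y 0 0 =
  \sum_(k < n) (X 0 (lshift n k) * Y 0 (rshift n k) - X 0 (rshift n k) * Y 0 (lshift n k)).
Proof.
rewrite /Cform /Omega -{1}[X]hsubmxK -{1}[Y]hsubmxK mul_row_block tr_row_mx mul_row_col.
rewrite !mulmx0 !mulmxN !mulmx1 add0r addr0 !mxE -big_split /=.
apply: eq_bigr => k _; rewrite !mxE; ring.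
Qed.
End G.

Section G2.
Variables (R : realType) (n : nat) (U : set R) (F : R -> 'rV[R[i]]_(n+n)).
Hypothesis sm : smooth_on U F.

Definition gfun i j t := Cform (Fder i F t) (Fder j F t) 0 0.
Local Notation g := gfun.

Lemma HD_F i k x : U x -> HD (fun t => Fder i F t 0 k) x (Fder i.+1 F x 0 k).
Proof.
move=> Ux; have [h1 h2] := sm i k x Ux.
apply: (HD_ext (u := cderive_n i (fun s => F s 0 k))) (HD_cd h1 h2) => [t|]; by rewrite mxE.
Qed.

Lemma g_HD i j x : U x -> HD (g i j) x (g i.+1 j x + g i j.+1 x).
Proof.
move=> Ux.
have H := HD_sum (fun k => HD_add (HD_mul (HD_F i (lshift n k) x Ux) (HD_F j (rshift n k) x Ux)) (HD_opp (HD_mul (HD_F i (rshift n k) x Ux) (HD_F j (lshift n k) x Ux)))). apply: HD_ext H => [t|].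
  by rewrite /gfun Cform_entry.
rewrite /gfun !Cform_entry -big_split /=; apply: eq_bigr => k _; ring.
Qed.

Lemma g_const i j c : open U -> (forall t, U t -> g i j t = c) ->
  forall x, U x -> g i.+1 j x + g i j.+1 x = 0.
Proof.
move=> oU hc x Ux; apply: (HD_near_cst (c := c)) (g_HD i j x Ux).
have : nbhs x U by apply: open_nbhs_nbhs; split.
by apply: filterS => t /hc.
Qed.

Lemma g_anti i j t : g i j t = - g j i t.
Proof. rewrite /gfun !Cform_entry -sumrN; apply: eq_bigr => k _; ring. Qed.

Lemma g_diag i t : g i i t = 0.
Proof. rewrite /gfun Cform_entry; apply: big1 => k _; ring. Qed.
End G2.


Section Z.
Variables (R : realType) (n : nat) (U : set R) (F : R -> 'rV[R[i]]_(n+n)).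
Hypotheses (hn : (0 < n)%N) (oU : open U) (sm : smooth_on U F)
  (h1 : forall x, U x -> forall i : nat, (i.+2 <= n)%N ->
      Cform (Fder i F x) (Fder i.+1 F x) = 0)
  (h2 : forall x, U x -> Cform (Fder n.-1 F x) (Fder n F x) = - 1%:M).

Local Notation g := (@gfun R n F).

Lemma gz1 i t : U t -> (i.+2 <= n)%N -> g i i.+1 t = 0.
Proof. by move=> Ut hi; rewrite /gfun h1 // mxE. Qed.

Lemma gn t : U t -> g n.-1 n t = -1.
Proof. by move=> Ut; rewrite /gfun h2 // !mxE. Qed.

Lemma Zpair d : forall i, (i + (i + d) <= (n + n) - 2)%N -> forall t, U t -> g i (i + d) t = 0.
Proof.
suff: (forall i, (i + (i + d) <= (n + n) - 2)%N -> forall t, U t -> g i (i + d) t = 0) /\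
      (forall i, (i + (i + d.+1) <= (n + n) - 2)%N -> forall t, U t -> g i (i + d.+1) t = 0).
  by case.
elim: d => [|d [IH1 IH2]].
  split=> i hi t Ut; first by rewrite addn0 g_diag.
  by rewrite addn1 gz1 //; lia.
split=> // i hi t Ut.
have e := @g_const R n U F sm i (i + d.+1) 0 oU.
have := e (IH2 i ltac:(lia)) t Ut.
have -> : (i + d.+2 = (i + d.+1).+1)%N by lia.
have -> : (i + d.+1 = i.+1 + d)%N by lia.
rewrite IH1 ?add0r //; lia.
Qed.

Lemma Zall i j t : U t -> (i + j <= (n + n) - 2)%N -> g i j t = 0.
Proof.
move=> Ut hij; case: (leqP i j) => hle.
  have -> : j = (i + (j - i))%N by lia.
  apply: Zpair => //; lia.
rewrite g_anti.
have -> : i = (j + (i - j))%N by lia.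
rewrite Zpair ?oppr0 //; lia.
Qed.

Lemma diagv m t : U t -> (m <= n.-1)%N -> g (n.-1 - m) (n + m) t = (-1) ^+ m.+1.
Proof.
move=> Ut; elim: m => [|m IH] hm.
  by rewrite subn0 addn0 gn // expr1.
have e := @g_const R n U F sm (n.-1 - m.+1)%N (n + m)%N 0 oU.
have := e (fun s Us => Zall (n.-1 - m.+1) (n + m) s Us ltac:(lia)) t Ut.
have -> : ((n.-1 - m.+1).+1 = n.-1 - m)%N by lia.
rewrite IH; last by lia.
rewrite -addnS => /eqP; rewrite addrC addr_eq0 => /eqP ->.
by rewrite [in RHS]exprS mulN1r.
Qed.
End Z.



Section Abs.
Variables (T : comRingType) (m p : nat) (Om : 'M[T]_m).
Hypothesis OmT : Om^T = - Om.
Hypothesis hdiag : forall x : 'rV[T]_m, (x *m Om *m x^T) 0 0 = 0.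

Lemma antiT' q r (X : 'M[T]_(q, m)) (Y : 'M[T]_(r, m)) :
  (X *m Om *m Y^T)^T = - (Y *m Om *m X^T).
Proof. by rewrite !trmx_mul trmxK OmT mulNmx mulmxN mulmxA. Qed.

Lemma diag' q (X : 'M[T]_(q, m)) a : (X *m Om *m X^T) a a = 0.
Proof.
rewrite -(hdiag (row a X)) !mxE; apply: eq_bigr => k _; rewrite !mxE; congr (_ * _).
by apply: eq_bigr => l _; rewrite !mxE.
Qed.

Variables (E0 L : 'M[T]_(p, m)) (i0 : 'I_p).
Hypotheses (hi0 : forall b : 'I_p, (b <= i0)%N)
  (hLL : L *m Om *m L^T = 0) (hE0L : E0 *m Om *m L^T = 1%:M).

Definition A := E0 *m Om *m E0^T.
Definition S : 'M[T]_p := \matrix_(a, b) if (a < b)%N then A a b else 0.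
Definition E := E0 + S *m L.

Lemma LE0 : L *m Om *m E0^T = - 1%:M.
Proof. by rewrite -[L *m Om *m E0^T]opprK -antiT' hE0L trmx1. Qed.

Lemma EL : E *m Om *m L^T = 1%:M.
Proof.
rewrite /E !mulmxDl hE0L.
have -> : S *m L *m Om *m L^T = S *m (L *m Om *m L^T) by rewrite !mulmxA.
by rewrite hLL mulmx0 addr0.
Qed.

Lemma EE : E *m Om *m E^T = 0.
Proof.
rewrite /E linearD /= [(S *m L)^T]trmx_mul !mulmxDl !mulmxDr.
have -> : E0 *m Om *m (L^T *m S^T) = S^T by rewrite mulmxA hE0L mul1mx.
have -> : S *m L *m Om *m E0^T = - S.
  by rewrite -!mulmxA [L *m (Om *m E0^T)]mulmxA LE0 mulmxN mulmx1.
have -> : S *m L *m Om *m (L^T *m S^T) = 0.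
  have -> : S *m L *m Om *m (L^T *m S^T) = S *m (L *m Om *m L^T) *m S^T by rewrite !mulmxA.
  by rewrite hLL mulmx0 mul0mx.
rewrite -/A.
have hAT : A^T = - A by rewrite /A antiT'.
have hAd : forall a, A a a = 0 by move=> a; rewrite /A diag'.
rewrite /S; move: hAT hAd; generalize A => B hBT hBd.
apply/matrixP => a b; rewrite !mxE.
have antiB : B b a = - B a b.
  by have := congr1 (fun X : 'M[T]_p => X a b) hBT; rewrite !mxE.
case: (ltngtP a b) => hab.
- by rewrite !addr0 subrr.
- by rewrite antiB oppr0 !addr0 subrr.
- have eba : b = a by apply: val_inj.
  subst b; have := hBd a => ->; by rewrite oppr0 !addr0.
Qed.

Lemma rowE : row i0 E = row i0 E0.
Proof.
rewrite /E linearD /= row_mul.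
have -> : row i0 S = 0.
  by apply/rowP => b; rewrite !mxE /= ltnNge hi0.
by rewrite mul0mx addr0.
Qed.

Lemma sympl_block : col_mx E L *m Om *m (col_mx E L)^T =
   block_mx 0 1%:M (- 1%:M) 0.
Proof.
rewrite tr_col_mx mul_col_mx mul_col_row EE EL hLL.
by rewrite -[L *m Om *m E^T]opprK -antiT' EL trmx1.
Qed.
End Abs.
Arguments E {T m p}.
Arguments sympl_block {T m p Om}.
Arguments rowE {T m p} Om E0 L {i0}.

Section LA.
Variables (R : realType) (n : nat) (v : nat -> 'rV[R[i]]_(n+n)).
Hypotheses (hn : (0 < n)%N)
  (hZ : forall i j, (i + j <= n + n - 2)%N -> Cform (v i) (v j) 0 0 = 0)
  (hD : forall m, (m <= n.-1)%N -> Cform (v (n.-1 - m)) (v (n + m)) 0 0 = (-1) ^+ m.+1).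

Local Notation Om := (Omega R n).

Lemma Cform_diag (X : 'rV[R[i]]_(n+n)) : Cform X X 0 0 = 0.
Proof. rewrite Cform_entry; apply: big1 => k _; ring. Qed.

Lemma Cform_anti (X Y : 'rV[R[i]]_(n+n)) : Cform X Y 0 0 = - Cform Y X 0 0.
Proof. rewrite !Cform_entry -sumrN; apply: eq_bigr => k _; ring. Qed.

Lemma bil p q (X : 'M[R[i]]_(p, n + n)) (Y : 'M[R[i]]_(q, n + n)) a b :
  (X *m Om *m Y^T) a b = Cform (row a X) (row b Y) 0 0.
Proof.
rewrite /Cform !mxE; apply: eq_bigr => k _; rewrite !mxE; congr (_ * _).
by apply: eq_bigr => l _; rewrite !mxE.
Qed.

Lemma OmT : Om^T = - Om.
Proof.
by rewrite /Omega tr_block_mx !trmx0 linearN /= trmx1 opp_block_mx !oppr0 opprK.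
Qed.

Lemma antiT p q (X : 'M[R[i]]_(p, n + n)) (Y : 'M[R[i]]_(q, n + n)) :
  (X *m Om *m Y^T)^T = - (Y *m Om *m X^T).
Proof. by rewrite !trmx_mul trmxK OmT mulNmx mulmxN mulmxA. Qed.

Definition L : 'M[R[i]]_(n, n + n) := \matrix_(b < n, k < n + n) v b 0 k.
Definition H : 'M[R[i]]_(n, n + n) := \matrix_(a < n, k < n + n) v (n + (n.-1 - a)) 0 k.

Lemma rowL b : row b L = v b.
Proof. by apply/rowP => k; rewrite !mxE. Qed.
Lemma rowH a : row a H = v (n + (n.-1 - a)).
Proof. by apply/rowP => k; rewrite !mxE. Qed.

Definition M := H *m Om *m L^T.

Lemma ME a b : M a b = Cform (v (n + (n.-1 - a))) (v b) 0 0.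
Proof. by rewrite /M bil rowL rowH. Qed.

Lemma M_unit : M \in unitmx.
Proof.
have ltri : is_trig_mx M^T.
  apply/is_trig_mxP => a b ab; rewrite mxE ME hZ //.
  have := ltn_ord b; move: ab; rewrite -!subn1; lia.
rewrite unitmxE -det_tr (det_trig ltri) unitfE; apply/prodf_neq0.
move=> a _; rewrite mxE ME Cform_anti.
have ha : (n.-1 - a <= n.-1)%N by lia.
have := hD _ ha; have -> : (n.-1 - (n.-1 - a) = a)%N by have := ltn_ord a; rewrite -!subn1; lia.
by move=> ->; rewrite oppr_eq0 expf_neq0 // oppr_eq0 oner_eq0.
Qed.

Definition il : 'I_n := @Ordinal n n.-1 ltac:(by rewrite ltn_predL).

Lemma rowM_il : row il M = row il 1%:M.
Proof.
apply/rowP => b; rewrite [LHS]mxE ME [RHS]mxE [RHS]mxE /=.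
have -> : (n + (n.-1 - n.-1) = n)%N by rewrite subnn addn0.
have hb := ltn_ord b.
case: (ltngtP b n.-1) => hb'.
- rewrite hZ; last by move: hb'; rewrite -!subn1; lia.
  by rewrite (_ : (il == b) = false) //; apply/eqP => e; move: hb'; rewrite -e /= ltnn.
- by move: hb'; rewrite -!subn1; lia.
- have eb : b = il by apply: val_inj.
  rewrite eb /= Cform_anti; have := hD 0 (leq0n _); rewrite subn0 addn0 => ->.
  by rewrite eqxx expr1 opprK.
Qed.

Definition E0 := invmx M *m H.

Lemma rowE0 : row il E0 = v n.
Proof.
have : row il (invmx M) = row il 1%:M.
  rewrite -[invmx M]mul1mx row_mul -[in LHS]rowM_il -row_mul mulmxV //; exact: M_unit.
rewrite /E0 row_mul => ->; rewrite -row_mul mul1mx rowH /=.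
by rewrite subnn addn0.
Qed.

Lemma LL : L *m Om *m L^T = 0.
Proof.
apply/matrixP => a b; rewrite bil !rowL [RHS]mxE hZ //.
have := ltn_ord a; have := ltn_ord b; lia.
Qed.

Lemma E0L : E0 *m Om *m L^T = 1%:M.
Proof.
have -> : E0 *m Om *m L^T = invmx M *m M by rewrite /E0 /M !mulmxA.
rewrite mulVmx //; exact: M_unit.
Qed.

Lemma main_LA : exists Phi : 'M[R[i]]_(n + n),
      symplectic Phi /\
      (forall r : 'I_(n + n), val r = n.-1 -> row r Phi = v n) /\
      (forall (r : 'I_(n + n)) (j : nat), val r = (n + j)%N -> row r Phi = v j).
Proof.
have hi0 : forall b : 'I_n, (b <= il)%N by move=> b; rewrite /il /=; have := ltn_ord b; rewrite -subn1; lia.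
exists (col_mx (E Om E0 L) L); split; [|split].
- rewrite /symplectic (sympl_block OmT Cform_diag _ _ LL E0L).
  by rewrite /Omega.
- move=> r hr; have -> : r = lshift n il by apply: val_inj.
  by rewrite rowKu (rowE Om E0 L hi0) rowE0.
- move=> r j hr; have hj : (j < n)%N by have := ltn_ord r; rewrite -[nat_of_ord r]/(val r) hr; lia.
  have -> : r = rshift n (Ordinal hj) by apply: val_inj.
  by rewrite rowKd rowL.
Qed.
End LA.

Theorem proposition4p3 (R : realType) (n : nat) (U : set R)
    (F : R -> 'rV[R[i]]_(n + n)) :
  (0 < n)%N ->
  open U ->
  smooth_on U F ->
  (forall x, U x -> forall i : nat, (i.+2 <= n)%N ->
      Cform (Fder i F x) (Fder i.+1 F x) = 0) ->
  (forall x, U x -> Cform (Fder n.-1 F x) (Fder n F x) = - 1%:M) ->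
  forall x, U x ->
    exists Phi : 'M[R[i]]_(n + n),
      symplectic Phi /\
      (forall r : 'I_(n + n), val r = n.-1 -> row r Phi = Fder n F x) /\
      (forall (r : 'I_(n + n)) (j : nat), val r = (n + j)%N ->
          row r Phi = Fder j F x).
Proof.
move=> hn oU sm h1 h2 x Ux.
apply: (@main_LA R n (fun j => Fder j F x) hn).
- by move=> i j hij; exact: (@Zall R n U F hn oU sm h1 i j x Ux hij).
- by move=> m hm; exact: (@diagv R n U F hn oU sm h1 h2 m x Ux hm).
Qed.
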